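(* Let $n\ge 2$ and let $\Phi\subset\mathbb{R}^3$ be a root system of type $I_2(n)$ lying in a 2-dimensional subspace of $\mathbb{R}^3$, with unit simple roots $\alpha_1,\alpha_2$ (so $\alpha_1\cdot\alpha_2=-\cos\frac{\pi}{n}$). Let $P$ be the group generated under the geometric product by $\Phi\cup\{e_1e_2e_3\}$ and let $G=P\cap\mathrm{Cl}^+(3)$. Then $G$, regarded as a set of vectors in the 4-dimensional Euclidean space $(\mathrm{Cl}^+(3),(\cdot,\cdot))$, is a root system of type $I_2(n)\oplus I_2(n)$, and $\{\alpha_1\alpha_1,\ \alpha_1\alpha_2,\ \alpha_1e_1e_2e_3,\ \alpha_2e_1e_2e_3\}$ is a set of simple roots for it, with Cartan matrix $$\begin{pmatrix}2&-2\cos\frac{\pi}{n}&0&0\\-2\cos\frac{\pi}{n}&2&0&0\\0&0&2&-2\cos\frac{\pi}{n}\\0&0&-2\cos\frac{\pi}{n}&2\end{pmatrix}.$$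
   Context: $\mathrm{Cl}(3)$ is the real Clifford algebra of Euclidean $\mathbb{R}^3$ with orthonormal basis $e_1,e_2,e_3$ ($e_i^2=1$, $e_ie_j=-e_je_i$ for $i\neq j$); vectors of $\mathbb{R}^3$ are elements of $\mathrm{Cl}(3)$ and $e_1e_2e_3$ is the pseudoscalar (inversion). The even subalgebra $\mathrm{Cl}^+(3)$ is spanned by $1,e_2e_3,e_3e_1,e_1e_2$. Reversal $\tilde{\ }$ reverses the order of vector factors. The spinor inner product $(R_1,R_2)=\tfrac12(R_1\tilde R_2+R_2\tilde R_1)$ makes $\mathrm{Cl}^+(3)$ a 4D Euclidean space with orthonormal basis $1,e_2e_3,e_3e_1,e_1e_2$. A root system is a finite set $\Phi$ of nonzero vectors spanning its linear span, with $\Phi\cap\mathbb{R}\alpha=\{\pm\alpha\}$ and $s_\alpha(\Phi)=\Phi$ for all $\alpha\in\Phi$, where $s_\alpha(x)=x-2\frac{(x,\alpha)}{(\alpha,\alpha)}\alpha$. The Cartan matrix of simple roots $\beta_i$ is $A_{ij}=2(\beta_i,\beta_j)/(\beta_i,\beta_i)$. $I_2(n)$ is the rank-2 root system of the dihedral group of order $2n$; $I_2(n)\oplus I_2(n)$ is the union of two copies in mutually orthogonal planes. *)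

(* Defs.v *)
From HB Require Import structures.
From mathcomp Require Import all_boot all_order all_algebra.
From mathcomp Require Import classical_sets boolp cardinality reals trigo.
Set Implicit Arguments. Unset Strict Implicit. Unset Printing Implicit Defensive.
Import Order.TTheory GRing.Theory Num.Theory.
Local Open Scope ring_scope.
Local Open Scope classical_set_scope.

Section RootSystems.
Context {R : realType} (V : lmodType R) (ip : V -> V -> R).

Definition refl (a x : V) : V := x - ((2 * ip x a) / ip a a) *: a.

(* Finite set of nonzero vectors, Phi ∩ R a = {±a}, stable under all s_a.
   ("spanning its linear span" is vacuous.) *)
Definition root_system (Phi : set V) : Prop :=
  [/\ finite_set Phi,
      (forall a, Phi a -> a != 0),
      (forall a, Phi a -> Phi (- a)),
      (forall a (c : R), Phi a -> Phi (c *: a) -> c = 1 \/ c = -1)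
    & (forall a x, Phi a -> Phi x -> Phi (refl a x))].

Definition simple_system (k : nat) (Phi : set V) (b : 'I_k -> V) : Prop :=
  [/\ (forall i, Phi (b i)),
      (forall c : 'I_k -> R, \sum_(i < k) c i *: b i = 0 -> forall i, c i = 0)
    & (forall x, Phi x -> exists c : 'I_k -> R,
          x = \sum_(i < k) c i *: b i /\
          ((forall i, 0 <= c i) \/ (forall i, c i <= 0)))].

Definition cartan (k : nat) (b : 'I_k -> V) : 'M[R]_k :=
  \matrix_(i < k, j < k) (2 * ip (b i) (b j) / ip (b i) (b i)).

End RootSystems.

Definition I2cartan (R : realType) (n : nat) : 'M[R]_2 :=
  \matrix_(i < 2, j < 2) (if i == j then 2 else - 2 * cos (pi / n%:R)).

Definition I2I2cartan (R : realType) (n : nat) : 'M[R]_4 :=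
  \matrix_(i < 4, j < 4)
    (if i == j then 2
     else if ((i : nat) %/ 2 == (j : nat) %/ 2)%N then - 2 * cos (pi / n%:R)
     else 0).

Definition is_type_I2 {R : realType} (V : lmodType R) (ip : V -> V -> R)
  (n : nat) (Phi : set V) : Prop :=
  root_system ip Phi /\
  exists b : 'I_2 -> V, simple_system Phi b /\ cartan ip b = I2cartan R n.

Definition is_type_I2I2 {R : realType} (V : lmodType R) (ip : V -> V -> R)
  (n : nat) (Phi : set V) : Prop :=
  root_system ip Phi /\
  exists Phi1 Phi2 : set V,
    [/\ Phi = Phi1 `|` Phi2,
        (forall a b, Phi1 a -> Phi2 b -> ip a b = 0),
        is_type_I2 ip n Phi1 & is_type_I2 ip n Phi2].

Definition dot3 {R : realType} (u v : 'rV[R]_3) : R := (u *m v^T) 0 0.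

(* An element is a row of 8 coordinates on the blades e_A, A ⊆ {1,2,3},*)
(* indexed by the bitmask a of A (bit 0 <-> e1, bit 1 <-> e2,           *)
(* bit 2 <-> e3), each blade being the increasing product, e.g.         *)
(* index 3 = e1e2, 5 = e1e3, 6 = e2e3, 7 = e1e2e3.                       *)
Definition Cl3 (R : realType) := 'rV[R]_8.

Definition bitn (k a : nat) : bool := odd (a %/ 2 ^ k).

Definition bxor (a b : nat) : nat := (\sum_(k < 3) (bitn k a (+) bitn k b) * 2 ^ k)%N.

(* number of transpositions needed to bring e_A e_B into increasing order *)
Definition nswaps (a b : nat) : nat :=
  (\sum_(i < 3) \sum_(j < 3 | (j < i)%N) (bitn i a && bitn j b))%N.

(* e_A e_B = (-1)^nswaps e_(A xor B), since e_i^2 = 1 *)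
Definition clmul {R : realType} (x y : Cl3 R) : Cl3 R :=
  \row_(c < 8) \sum_(a < 8) \sum_(b < 8 | bxor a b == c)
      ((-1) ^+ nswaps a b * x 0 a * y 0 b).

Definition blade (R : realType) (a : 'I_8) : Cl3 R := \row_(c < 8) (c == a)%:R.

Definition cl1 (R : realType) : Cl3 R := blade R (inord 0).
Definition e123 (R : realType) : Cl3 R := blade R (inord 7).

Definition grade (a : nat) : nat := (bitn 0 a + bitn 1 a + bitn 2 a)%N.

Definition vec {R : realType} (v : 'rV[R]_3) : Cl3 R :=
  \sum_(i < 3) v 0 i *: blade R (inord (2 ^ i)).

Definition cl_even (R : realType) : set (Cl3 R) :=
  [set x | forall a : 'I_8, odd (grade a) -> x 0 a = 0].

Definition clrev {R : realType} (x : Cl3 R) : Cl3 R :=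
  \row_(a < 8) ((-1) ^+ 'C(grade a, 2) * x 0 a).

(* spinor inner product (R1,R2) = 1/2 (R1 ~R2 + R2 ~R1), a scalar for
   R1, R2 in Cl^+(3); we take its scalar (grade-0) coordinate. *)
Definition spinor_ip {R : realType} (x y : Cl3 R) : R :=
  (clmul x (clrev y) + clmul y (clrev x)) 0 0 / 2.

Inductive gen_group {R : realType} (S : set (Cl3 R)) : Cl3 R -> Prop :=
  | gg_one : gen_group S (cl1 R)
  | gg_gen x : S x -> gen_group S x
  | gg_mul x y : gen_group S x -> gen_group S y -> gen_group S (clmul x y)
  | gg_inv x y : gen_group S x -> clmul x y = cl1 R -> clmul y x = cl1 R ->
                 gen_group S y.

(* Main.v *)
Require Import Defs.
From HB Require Import structures.
From mathcomp Require Import all_boot all_order all_algebra.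
From mathcomp Require Import classical_sets boolp cardinality reals trigo.
Import Order.TTheory GRing.Theory Num.Theory.
Local Open Scope ring_scope.
Local Open Scope classical_set_scope.
From mathcomp Require Import zify ring lra.
Set Implicit Arguments. Unset Strict Implicit. Unset Printing Implicit Defensive.

Definition bx (a b : nat) : nat :=
  ((bitn 0 a (+) bitn 0 b) + (bitn 1 a (+) bitn 1 b) * 2 + (bitn 2 a (+) bitn 2 b) * 4)%N.
Definition nsw (a b : nat) : nat :=
  ((bitn 1 a && bitn 0 b) + (bitn 2 a && bitn 0 b) + (bitn 2 a && bitn 1 b))%N.

Lemma bxorE a b : bxor a b = bx a b.
Proof. rewrite /bxor !big_ord_recr big_ord0 /= /bx. lia. Qed.
Lemma nswapsE a b : nswaps a b = nsw a b.
Proof.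
rewrite /nswaps !big_ord_recr big_ord0 /=.
rewrite (big_mkcond (fun j : 'I_3 => (j < 0)%N)) (big_mkcond (fun j : 'I_3 => (j < 1)%N)) (big_mkcond (fun j : 'I_3 => (j < 2)%N)) /= !big_ord_recr !big_ord0 /= /nsw. lia.
Qed.

Definition all8 (P : nat -> bool) := all P (iota 0 8).
Lemma all8P P : all8 P -> forall a : 'I_8, P a.
Proof. move=> /allP H a; apply: H; rewrite mem_iota /=; exact: ltn_ord. Qed.

Lemma tab_lt : all8 (fun a => all8 (fun b => bx a b < 8)%N).
Proof. by []. Qed.
Lemma tab_assoc : all8 (fun a => all8 (fun b => all8 (fun c =>
   (bx (bx a b) c == bx a (bx b c)) &&
   (odd (nsw a b + nsw (bx a b) c) == odd (nsw b c + nsw a (bx b c)))))).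
Proof. by []. Qed.
Lemma tab_rev : all8 (fun a => all8 (fun b =>
   odd ('C(grade (bx a b), 2) + nsw a b) == odd ('C(grade a, 2) + 'C(grade b, 2) + nsw b a))).
Proof. by []. Qed.
Lemma tab_par : all8 (fun a => all8 (fun b =>
   odd (grade (bx a b)) == odd (grade a) (+) odd (grade b))).
Proof. by []. Qed.

Section Cl.
Variable R : realType.
Local Notation CL := (Cl3 R).
Implicit Types x y z : CL.

Definition bxo (a b : 'I_8) : 'I_8 := inord (bx a b).
Lemma bx_lt (a b : 'I_8) : (bx a b < 8)%N.
Proof. exact: (all8P (all8P tab_lt a) b). Qed.
Lemma bxoE (a b : 'I_8) : (bxo a b : nat) = bx a b.
Proof. by rewrite inordK // bx_lt. Qed.

Lemma clE x : x = \sum_(a < 8) x 0 a *: blade R a.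
Proof.
apply/rowP => c; rewrite summxE (bigD1 c) //= big1 ?addr0.
  by rewrite !mxE eqxx mulr1.
by move=> a /negbTE ac; rewrite !mxE eq_sym ac mulr0.
Qed.

Lemma clmulE x y c : clmul x y 0 c =
  \sum_(a < 8) \sum_(b < 8 | bxor a b == c) ((-1) ^+ nswaps a b * x 0 a * y 0 b).
Proof. by rewrite mxE. Qed.

Lemma clmulDl x y z : clmul (x + y) z = clmul x z + clmul y z.
Proof.
apply/rowP => c; rewrite !mxE -big_split; apply: eq_bigr => a _.
rewrite -big_split; apply: eq_bigr => b _; rewrite !mxE /=; ring.
Qed.
Lemma clmulDr x y z : clmul x (y + z) = clmul x y + clmul x z.
Proof.
apply/rowP => c; rewrite !mxE -big_split; apply: eq_bigr => a _.
rewrite -big_split; apply: eq_bigr => b _; rewrite !mxE /=; ring.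
Qed.
Lemma clmulZl (k : R) x y : clmul (k *: x) y = k *: clmul x y.
Proof.
apply/rowP => c; rewrite !mxE mulr_sumr; apply: eq_bigr => a _.
rewrite mulr_sumr; apply: eq_bigr => b _; rewrite !mxE /=; ring.
Qed.
Lemma clmulZr (k : R) x y : clmul x (k *: y) = k *: clmul x y.
Proof.
apply/rowP => c; rewrite !mxE mulr_sumr; apply: eq_bigr => a _.
rewrite mulr_sumr; apply: eq_bigr => b _; rewrite !mxE /=; ring.
Qed.
Lemma clmul0l y : clmul 0 y = 0.
Proof. have -> : (0 : CL) = (0:R) *: (0:CL) by rewrite scale0r. by rewrite clmulZl !scale0r. Qed.
Lemma clmul0r y : clmul y 0 = 0.
Proof. have -> : (0 : CL) = (0:R) *: (0:CL) by rewrite scale0r. by rewrite clmulZr !scale0r. Qed.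
Lemma clmulNl x y : clmul (- x) y = - clmul x y.
Proof. by rewrite -scaleN1r clmulZl scaleN1r. Qed.
Lemma clmulNr x y : clmul x (- y) = - clmul x y.
Proof. by rewrite -scaleN1r clmulZr scaleN1r. Qed.
Lemma clmulBl x y z : clmul (x - y) z = clmul x z - clmul y z.
Proof. by rewrite clmulDl clmulNl. Qed.
Lemma clmulBr x y z : clmul x (y - z) = clmul x y - clmul x z.
Proof. by rewrite clmulDr clmulNr. Qed.
Lemma clmul_suml I r (P : pred I) (F : I -> CL) y :
  clmul (\sum_(i <- r | P i) F i) y = \sum_(i <- r | P i) clmul (F i) y.
Proof. exact: (big_morph (fun x => clmul x y) (fun a b => clmulDl a b y) (clmul0l y)). Qed.
Lemma clmul_sumr I r (P : pred I) (F : I -> CL) y :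
  clmul y (\sum_(i <- r | P i) F i) = \sum_(i <- r | P i) clmul y (F i).
Proof. exact: (big_morph (fun x => clmul y x) (fun a b => clmulDr y a b) (clmul0r y)). Qed.

Lemma blade_mul (a b : 'I_8) :
  clmul (blade R a) (blade R b) = (-1) ^+ nsw a b *: blade R (bxo a b).
Proof.
apply/rowP => c; rewrite !mxE (bigD1 a) //= [X in _ + X]big1 ?addr0; last first.
  move=> a' na; apply: big1 => b' _; rewrite !mxE (negbTE na) /=; ring.
rewrite big_mkcond (bigD1 b) //= [X in _ + X]big1 ?addr0; last first.
  move=> b' nb; case: ifP => // _; rewrite !mxE (negbTE nb) /=; ring.
rewrite !mxE !eqxx nswapsE bxorE.
have -> : (c == bxo a b) = (bx a b == c).
  by apply/eqP/eqP => [->|H]; [rewrite bxoE | apply/val_inj; rewrite /= bxoE H].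
by case: ifP => _; rewrite /=; ring.
Qed.

Lemma sgnE (m : nat) : (-1 : R) ^+ m = (-1) ^+ (odd m).
Proof. by rewrite signr_odd. Qed.

Lemma blade_assoc (a b c : 'I_8) :
  clmul (clmul (blade R a) (blade R b)) (blade R c) =
  clmul (blade R a) (clmul (blade R b) (blade R c)).
Proof.
rewrite !blade_mul clmulZl clmulZr !blade_mul !scalerA.
have /andP[/eqP h1 /eqP h2] := all8P (all8P (all8P tab_assoc a) b) c.
have e : bxo (bxo a b) c = bxo a (bxo b c) by apply/val_inj; rewrite /= !bxoE.
by rewrite e -!exprD !bxoE [in LHS]sgnE [in RHS]sgnE h2.
Qed.

Lemma clmulA_bb (a b : 'I_8) z :
  clmul (clmul (blade R a) (blade R b)) z = clmul (blade R a) (clmul (blade R b) z).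
Proof.
rewrite (clE z) !clmul_sumr; apply: eq_bigr => c _.
by rewrite !clmulZr blade_assoc.
Qed.
Lemma clmulA_b (a : 'I_8) y z :
  clmul (clmul (blade R a) y) z = clmul (blade R a) (clmul y z).
Proof.
rewrite (clE y) clmul_sumr clmul_suml clmul_suml clmul_sumr; apply: eq_bigr => b _.
by rewrite clmulZr !clmulZl clmulZr clmulA_bb.
Qed.
Lemma clmulA x y z : clmul (clmul x y) z = clmul x (clmul y z).
Proof.
rewrite (clE x) clmul_suml clmul_suml clmul_suml; apply: eq_bigr => a _.
by rewrite !clmulZl clmulA_b.
Qed.

Lemma tab_id : all8 (fun b => [&& bx 0 b == b, nsw 0 b == 0%N, bx b 0 == b & nsw b 0 == 0%N]).
Proof. by []. Qed.
Lemma tab_I : all8 (fun b => (bx 7 b == bx b 7) && (odd (nsw 7 b) == odd (nsw b 7))).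
Proof. by []. Qed.
Lemma tab_comm : all8 (fun a => all8 (fun b => bx a b == bx b a)).
Proof. by []. Qed.

Lemma inord_val (k : nat) : (k < 8)%N -> ((inord k : 'I_8) : nat) = k.
Proof. by move=> h; rewrite inordK. Qed.

Lemma blade_mulc (a b : nat) : (a < 8)%N -> (b < 8)%N ->
  clmul (blade R (inord a)) (blade R (inord b)) = (-1) ^+ nsw a b *: blade R (inord (bx a b)).
Proof. by move=> ha hb; rewrite blade_mul /bxo !inordK. Qed.

Lemma blade_mulk (a b c s : nat) : (a < 8)%N -> (b < 8)%N -> bx a b = c -> nsw a b = s ->
  clmul (blade R (inord a)) (blade R (inord b)) = (-1) ^+ s *: blade R (inord c).
Proof. by move=> ha hb <- <-; apply: blade_mulc. Qed.

Lemma clmul1x x : clmul (cl1 R) x = x.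
Proof.
rewrite [RHS]clE [in LHS](clE x) clmul_sumr; apply: eq_bigr => b _.
rewrite clmulZr /cl1 blade_mul inordK //.
have /and4P[/eqP h1 /eqP h2 _ _] := all8P tab_id b.
have -> : bxo (inord 0) b = b by apply/val_inj; rewrite /= bxoE inordK.
by rewrite h2 expr0 scale1r.
Qed.
Lemma clmulx1 x : clmul x (cl1 R) = x.
Proof.
rewrite [RHS]clE [in LHS](clE x) clmul_suml; apply: eq_bigr => b _.
rewrite clmulZl /cl1 blade_mul inordK //.
have /and4P[_ _ /eqP h1 /eqP h2] := all8P tab_id b.
have -> : bxo b (inord 0) = b by apply/val_inj; rewrite /= bxoE inordK.
by rewrite h2 expr0 scale1r.
Qed.

Lemma clI_central x : clmul (e123 R) x = clmul x (e123 R).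
Proof.
rewrite (clE x) clmul_sumr clmul_suml; apply: eq_bigr => b _.
rewrite clmulZr clmulZl /e123 !blade_mul inordK //.
have /andP[/eqP h1 /eqP h2] := all8P tab_I b.
have -> : bxo (inord 7) b = bxo b (inord 7) by apply/val_inj; rewrite /= !bxoE inordK.
by rewrite sgnE h2 -sgnE.
Qed.

Lemma clII : clmul (e123 R) (e123 R) = - cl1 R.
Proof. by rewrite /e123 (@blade_mulk 7 7 0 3) // /cl1 -signr_odd /= expr1 scaleN1r. Qed.

Ltac cnum := repeat match goal with
  | |- context [nsw ?a ?b] => let v := eval vm_compute in (nsw a b) in
       rewrite (_ : nsw a b = v); last by []
  | |- context [bx ?a ?b] => let v := eval vm_compute in (bx a b) in
       rewrite (_ : bx a b = v); last by []
  end.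

Lemma clrev_blade (a : 'I_8) : clrev (blade R a) = (-1) ^+ 'C(grade a, 2) *: blade R a.
Proof. by apply/rowP => c; rewrite !mxE; case: eqP => [->|_]; rewrite ?mulr0 ?mulr1. Qed.
Lemma clrevD x y : clrev (x + y) = clrev x + clrev y.
Proof. by apply/rowP => c; rewrite !mxE mulrDr. Qed.
Lemma clrevZ (k : R) x : clrev (k *: x) = k *: clrev x.
Proof. by apply/rowP => c; rewrite !mxE mulrCA. Qed.
Lemma clrev0 : clrev (0 : CL) = 0.
Proof. by apply/rowP => c; rewrite !mxE mulr0. Qed.
Lemma clrevN x : clrev (- x) = - clrev x.
Proof. by rewrite -scaleN1r clrevZ scaleN1r. Qed.
Lemma clrev_sum I r (P : pred I) (F : I -> CL) :
  clrev (\sum_(i <- r | P i) F i) = \sum_(i <- r | P i) clrev (F i).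
Proof. exact: (big_morph clrev clrevD clrev0). Qed.

Lemma clrev_mul_bb (a b : 'I_8) :
  clrev (clmul (blade R a) (blade R b)) = clmul (clrev (blade R b)) (clrev (blade R a)).
Proof.
rewrite !clrev_blade blade_mul clrevZ clrev_blade clmulZl clmulZr blade_mul !scalerA.
have e : bxo b a = bxo a b.
  by apply/val_inj; rewrite /= !bxoE; apply/eqP; exact: (all8P (all8P tab_comm b) a).
have /eqP h := all8P (all8P tab_rev a) b.
rewrite e -!exprD bxoE [in LHS]sgnE [in RHS]sgnE addnC h; congr ((-1) ^+ odd _ *: _).
lia.
Qed.
Lemma clrev_mul_b (a : 'I_8) y : clrev (clmul (blade R a) y) = clmul (clrev y) (clrev (blade R a)).
Proof.
rewrite (clE y) clmul_sumr !clrev_sum clmul_suml; apply: eq_bigr => b _.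
by rewrite clmulZr !clrevZ clmulZl clrev_mul_bb.
Qed.
Lemma clrev_mul x y : clrev (clmul x y) = clmul (clrev y) (clrev x).
Proof.
rewrite (clE x) clmul_suml !clrev_sum clmul_sumr; apply: eq_bigr => a _.
by rewrite clmulZl !clrevZ clmulZr clrev_mul_b.
Qed.

Lemma grade_inord k : (k < 8)%N -> grade (inord k : 'I_8) = grade k.
Proof. by move=> h; rewrite inordK. Qed.

Lemma clrev1 : clrev (cl1 R) = cl1 R.
Proof. by rewrite /cl1 clrev_blade grade_inord // expr0 scale1r. Qed.
Lemma clrevI : clrev (e123 R) = - e123 R.
Proof. rewrite /e123 clrev_blade grade_inord //. by rewrite (_ : 'C(grade 7, 2) = 3%N) // -signr_odd /= expr1 scaleN1r. Qed.

Lemma vecE (v : 'rV[R]_3) : vec v = v 0 0 *: blade R (inord 1) + v 0 1 *: blade R (inord 2) + v 0 2 *: blade R (inord 4).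
Proof.
rewrite /vec !big_ord_recr big_ord0 /= add0r.
by congr (_ + _ + _); congr (v 0 _ *: _); apply/val_inj.
Qed.

Lemma vec_lin (k : R) (u v : 'rV[R]_3) : vec (k *: u + v) = k *: vec u + vec v.
Proof. by apply/rowP => c; rewrite !vecE !mxE /=; ring. Qed.

Lemma dot3E (x y : 'rV[R]_3) : dot3 x y = x 0 0 * y 0 0 + x 0 1 * y 0 1 + x 0 2 * y 0 2.
Proof.
rewrite /dot3 !mxE !big_ord_recr big_ord0 /= add0r !mxE.
by congr (_ + _ + _); congr (x 0 _ * y 0 _); apply/val_inj.
Qed.

Lemma vec_rel (x y : 'rV[R]_3) :
  clmul (vec x) (vec y) + clmul (vec y) (vec x) = (2 * dot3 x y) *: cl1 R.
Proof.
rewrite !vecE !clmulDl !clmulDr !clmulZl !clmulZr !blade_mulc //; cnum.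
rewrite dot3E /cl1; apply/rowP => c; rewrite !mxE /=; ring.
Qed.

Lemma clrev_vec (v : 'rV[R]_3) : clrev (vec v) = vec v.
Proof.
rewrite !vecE !clrevD !clrevZ !clrev_blade !grade_inord //.
by rewrite (_ : 'C(grade 1, 2) = 0%N) // !expr0 !scale1r.
Qed.

Definition par (p : bool) (x : CL) := forall a : 'I_8, odd (grade a) != p -> x 0 a = 0.

Lemma par_mul p q x y : par p x -> par q y -> par (p (+) q) (clmul x y).
Proof.
move=> hx hy c hc; rewrite clmulE; apply: big1 => a _; apply: big1 => b /eqP hab.
have /eqP h := all8P (all8P tab_par a) b.
case: (boolP (odd (grade a) == p)) => [/eqP ha|ha]; last by rewrite hx // mulr0 mul0r.
case: (boolP (odd (grade b) == q)) => [/eqP hb|hb]; last by rewrite hy // mulr0.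
by move: hc; rewrite -hab bxorE h ha hb eqxx.
Qed.
Lemma par_lin p (k : R) x y : par p x -> par p y -> par p (k *: x + y).
Proof. by move=> hx hy a ha; rewrite !mxE hx // hy // mulr0 addr0. Qed.
Lemma par_scale p (k : R) x : par p x -> par p (k *: x).
Proof. by move=> hx a ha; rewrite !mxE hx // mulr0. Qed.
Lemma par_add p x y : par p x -> par p y -> par p (x + y).
Proof. by move=> hx hy a ha; rewrite !mxE hx // hy // addr0. Qed.
Lemma par_opp p x : par p x -> par p (- x).
Proof. by move=> hx a ha; rewrite !mxE hx // oppr0. Qed.
Lemma par_blade (a : 'I_8) : par (odd (grade a)) (blade R a).
Proof. by move=> c hc; rewrite !mxE; case: eqP => // e; move: hc; rewrite e eqxx. Qed.
Lemma par_bladek p (k : nat) : (k < 8)%N -> odd (grade k) = p -> par p (blade R (inord k)).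
Proof. by move=> hk <-; rewrite -(grade_inord hk); exact: par_blade. Qed.
Lemma par1 : par false (cl1 R).
Proof. exact: par_bladek. Qed.
Lemma parI : par true (e123 R).
Proof. exact: par_bladek. Qed.
Lemma par_vec v : par true (vec v).
Proof.
rewrite vecE; apply: par_add; [apply: par_add|]; apply: par_scale; exact: par_bladek.
Qed.
Lemma par_eq0 p x : par p x -> par (~~ p) x -> x = 0.
Proof.
move=> h1 h2; apply/rowP => a; rewrite mxE.
case: (boolP (odd (grade a) == p)) => [/eqP e|e]; last by apply: h1.
by apply: h2; rewrite e; case: p {e h1}.
Qed.
Lemma par_even x : cl_even x <-> par false x.
Proof.
split=> h a ha; apply: h; move: ha; by case: (odd (grade a)).
Qed.

Lemma cl1_neq0 : cl1 R != 0.
Proof. by apply/eqP => /rowP /(_ (inord 0)); rewrite !mxE eqxx /= => /eqP; rewrite oner_eq0. Qed.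

Lemma ip_linl (k : R) x y z : spinor_ip (k *: x + y) z = k * spinor_ip x z + spinor_ip y z.
Proof.
rewrite /spinor_ip clrevD clrevZ clmulDl clmulZl clmulDr clmulZr.
set A := clmul x (clrev z); set B := clmul y (clrev z).
set C := clmul z (clrev x); set D := clmul z (clrev y).
by rewrite !mxE /=; field.
Qed.
Lemma ip_sym x y : spinor_ip x y = spinor_ip y x.
Proof. by rewrite /spinor_ip addrC. Qed.

Definition sc (x : CL) := x 0 0.
Lemma sc_lin (k : R) x y : sc (k *: x + y) = k * sc x + sc y.
Proof. by rewrite /sc !mxE. Qed.
Lemma sc_add x y : sc (x + y) = sc x + sc y.
Proof. by rewrite /sc !mxE. Qed.
Lemma sc_scale (k : R) x : sc (k *: x) = k * sc x.
Proof. by rewrite /sc !mxE. Qed.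
Lemma sc_opp x : sc (- x) = - sc x.
Proof. by rewrite /sc !mxE. Qed.
Lemma sc_par x : par true x -> sc x = 0.
Proof. by move=> h; apply: h. Qed.
Lemma eq0inord k : (k < 8)%N -> ((0 : 'I_8) == inord k) = (k == 0%N).
Proof. by move=> hk; rewrite -(inj_eq val_inj) /= inordK // eq_sym. Qed.
Lemma blade00 k : (k < 8)%N -> blade R (inord k) 0 0 = (k == 0%N)%:R.
Proof.
by move=> hk; rewrite !mxE -(inj_eq val_inj) /= inordK // eq_sym.
Qed.

Lemma sc1 : sc (cl1 R) = 1.
Proof. by rewrite /sc /cl1 blade00. Qed.

Lemma sc_vv (x y : 'rV[R]_3) : sc (clmul (vec x) (vec y)) = dot3 x y.
Proof.
rewrite !vecE !clmulDl !clmulDr !clmulZl !clmulZr !blade_mulc //; cnum.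
rewrite dot3E /sc !mxE !eq0inord //=; ring.
Qed.
Lemma sc_vI (x : 'rV[R]_3) : sc (clmul (vec x) (e123 R)) = 0.
Proof.
rewrite /e123 !vecE !clmulDl !clmulZl !blade_mulc //; cnum.
rewrite /sc !mxE !eq0inord //=; ring.
Qed.

Lemma half x y : x + x = (2:R) *: y -> x = y.
Proof.
move=> h; have h2 : (2:R) *: x = 2 *: y by rewrite scaler_nat mulr2n.
have := congr1 (fun v => (2:R)^-1 *: v) h2; rewrite !scalerA mulVf ?scale1r //.
by rewrite pnatr_eq0.
Qed.

Section UW.
Variables u w : 'rV[R]_3.
Hypotheses (hu : dot3 u u = 1) (hw : dot3 w w = 1) (huw : dot3 u w = 0).
Local Notation U := (vec u).
Local Notation W := (vec w).
Local Notation B := (clmul (vec u) (vec w)).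
Local Notation one := (cl1 R).

Lemma UU : clmul U U = one.
Proof. by apply: half; rewrite vec_rel hu mulr1. Qed.
Lemma WW : clmul W W = one.
Proof. by apply: half; rewrite vec_rel hw mulr1. Qed.
Lemma WU : clmul W U = - B.
Proof. by apply/eqP; rewrite -addr_eq0 addrC vec_rel huw mulr0 scale0r. Qed.
Lemma UB : clmul U B = W.
Proof. by rewrite -clmulA UU clmul1x. Qed.
Lemma BW : clmul B W = U.
Proof. by rewrite clmulA WW clmulx1. Qed.
Lemma WB : clmul W B = - U.
Proof. by rewrite -clmulA WU clmulNl clmulA WW clmulx1. Qed.
Lemma BU : clmul B U = - W.
Proof. by rewrite clmulA WU clmulNr UB. Qed.
Lemma BB : clmul B B = - one.
Proof. by rewrite clmulA WB clmulNr UU. Qed.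

Definition emb (a b c d : R) := a *: one + b *: U + c *: W + d *: B.

Lemma emb_mul a b c d a' b' c' d' :
  clmul (emb a b c d) (emb a' b' c' d') =
  emb (a * a' + b * b' + c * c' - d * d') (a * b' + b * a' - c * d' + d * c')
      (a * c' + c * a' + b * d' - d * b') (a * d' + d * a' + b * c' - c * b').
Proof.
rewrite /emb !clmulDl !clmulDr !clmulZl !clmulZr !clmul1x !clmulx1.
rewrite UU WW WU UB BW WB BU BB.
move: (one) (U) (W) B => g0 g1 g2 g3.
by apply/rowP => k; rewrite !mxE; ring.
Qed.

Definition Vt (th : R) := cos th *: U + sin th *: W.
Definition Rt (th : R) := cos th *: one + sin th *: B.

Lemma Vt_emb th : Vt th = emb 0 (cos th) (sin th) 0.
Proof. by rewrite /Vt /emb !scale0r add0r addr0. Qed.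
Lemma Rt_emb th : Rt th = emb (cos th) 0 0 (sin th).
Proof. by rewrite /Rt /emb !scale0r addr0 addr0. Qed.

Lemma VV a b : clmul (Vt a) (Vt b) = Rt (b - a).
Proof.
rewrite !Vt_emb Rt_emb emb_mul cosB sinB; congr emb; ring.
Qed.
Lemma VR a b : clmul (Vt a) (Rt b) = Vt (a + b).
Proof.
rewrite !Vt_emb Rt_emb emb_mul cosD sinD; congr emb; ring.
Qed.
Lemma RV a b : clmul (Rt a) (Vt b) = Vt (b - a).
Proof.
rewrite !Vt_emb Rt_emb emb_mul cosB sinB; congr emb; ring.
Qed.
Lemma RR a b : clmul (Rt a) (Rt b) = Rt (a + b).
Proof.
rewrite !Rt_emb emb_mul cosD sinD; congr emb; ring.
Qed.
Lemma Rt0 : Rt 0 = one.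
Proof. by rewrite /Rt cos0 sin0 scale1r scale0r addr0. Qed.
Lemma Vt0 : Vt 0 = U.
Proof. by rewrite /Vt cos0 sin0 scale1r scale0r addr0. Qed.

Lemma par_B : par false B.
Proof. exact: (par_mul (par_vec u) (par_vec w)). Qed.
Lemma par_Vt th : par true (Vt th).
Proof. apply: par_lin; [exact: par_vec | exact: par_scale (par_vec w)]. Qed.
Lemma par_Rt th : par false (Rt th).
Proof. apply: par_lin; [exact: par1 | exact: par_scale par_B]. Qed.

Lemma clrevB : clrev B = - B.
Proof. by rewrite clrev_mul !clrev_vec WU. Qed.
Lemma clrev_emb a b c d : clrev (emb a b c d) = emb a b c (- d).
Proof.
by rewrite /emb !clrevD !clrevZ clrev1 !clrev_vec clrevB scalerN scaleNr.
Qed.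
Lemma sc_emb a b c d : sc (emb a b c d) = a.
Proof.
rewrite /emb !sc_add !sc_scale sc1 sc_vv huw (sc_par (par_vec u)) (sc_par (par_vec w)).
by ring.
Qed.

Lemma entry00 (z : CL) : z 0 0 = sc z.
Proof. by []. Qed.

Lemma ip_emb a b c d a' b' c' d' :
  spinor_ip (emb a b c d) (emb a' b' c' d') = a * a' + b * b' + c * c' + d * d'.
Proof.
by rewrite /spinor_ip !clrev_emb !emb_mul entry00 sc_add !sc_emb; field.
Qed.

Lemma clmulIr_rev x y :
  clmul (clmul x (e123 R)) (clrev (clmul y (e123 R))) = clmul x (clrev y).
Proof.
rewrite clrev_mul clrevI clmulNl clmulNr clmulA -(clmulA (e123 R) (e123 R)) clII.
by rewrite clmulNl clmul1x clmulNr opprK.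
Qed.
Lemma ip_II x y : spinor_ip (clmul x (e123 R)) (clmul y (e123 R)) = spinor_ip x y.
Proof. by rewrite /spinor_ip !clmulIr_rev. Qed.

Lemma sc_embI a b c d : sc (clmul (emb a b c d) (e123 R)) = 0.
Proof.
rewrite /emb !clmulDl !clmulZl !sc_add !sc_scale clmul1x (sc_par parI) !sc_vI.
by rewrite (sc_par (par_mul par_B parI)); ring.
Qed.

Lemma ip_cross a b c d a' b' c' d' :
  spinor_ip (emb a b c d) (clmul (emb a' b' c' d') (e123 R)) = 0.
Proof.
set x := emb a b c d; set y := emb a' b' c' d'.
have h1 : clmul x (clrev (clmul y (e123 R))) = - clmul (clmul x (clrev y)) (e123 R).
  by rewrite clrev_mul clrevI clmulNl clmulNr clI_central clmulA.
have h2 : clmul (clmul y (e123 R)) (clrev x) = clmul (clmul y (clrev x)) (e123 R).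
  by rewrite clmulA clI_central -clmulA.
rewrite /spinor_ip h1 h2 /x /y !clrev_emb !emb_mul entry00 sc_add sc_opp !sc_embI.
by rewrite oppr0 addr0 mul0r.
Qed.

End UW.
End Cl.

Section Trig.
Variable R : realType.

Lemma cos_per (x : R) (m : nat) : cos (x + m%:R * (pi *+ 2)) = cos x.
Proof. by rewrite mulr_natl (periodicn (@cosD2pi R)). Qed.
Lemma sin_per (x : R) (m : nat) : sin (x + m%:R * (pi *+ 2)) = sin x.
Proof. by rewrite mulr_natl (periodicn (@sinD2pi R)). Qed.
Lemma cos_perz (x : R) (q : int) : cos (x + q%:~R * (pi *+ 2)) = cos x.
Proof.
case: q => m; first by rewrite cos_per.
rewrite NegzE -(cos_per _ m.+1); congr cos; ring.
Qed.
Lemma sin_perz (x : R) (q : int) : sin (x + q%:~R * (pi *+ 2)) = sin x.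
Proof.
case: q => m; first by rewrite sin_per.
rewrite NegzE -(sin_per _ m.+1); congr sin; ring.
Qed.

Lemma cos_ref (a b : R) : cos b - 2 * cos (b - a) * cos a = cos (2 * a + pi - b).
Proof.
have e1 : cos b = cos ((b - a) + a) by rewrite subrK.
have e2 : cos (2 * a + pi - b) = - cos ((b - a) - a).
  by have := cosDpi (- ((b - a) - a)); rewrite cosN => <-; congr cos; ring.
by rewrite e1 e2; move: (b - a) => X; rewrite cosD cosB; ring.
Qed.
Lemma sin_ref (a b : R) : sin b - 2 * cos (b - a) * sin a = sin (2 * a + pi - b).
Proof.
have e1 : sin b = sin ((b - a) + a) by rewrite subrK.
have e2 : sin (2 * a + pi - b) = sin ((b - a) - a).
  by have := sinDpi (- ((b - a) - a)); rewrite sinN opprK => <-; congr sin; ring.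
by rewrite e1 e2; move: (b - a) => X; rewrite sinD sinB; ring.
Qed.

Variable n : nat.
Hypothesis hn : (2 <= n)%N.

Definition tn := pi / n%:R :> R.
Definition ang (k : int) := k%:~R * tn.

Lemma n_gt0 : 0 < n%:R :> R.
Proof. by rewrite ltr0n; lia. Qed.
Lemma tn_gt0 : 0 < tn.
Proof. by rewrite /tn divr_gt0 // ?pi_gt0 // n_gt0. Qed.
Lemma ntn : n%:R * tn = pi.
Proof. by rewrite /tn mulrC -mulrA mulVf ?mulr1 // gt_eqF // n_gt0. Qed.
Lemma tn_le : tn <= pi / 2.
Proof.
rewrite /tn ler_pdivrMr ?n_gt0 // mulrAC ler_pdivlMr // ler_pM2l ?pi_gt0 //.
by rewrite ler_nat.
Qed.
Lemma sin_tn : 0 < sin tn.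
Proof.
apply: sin_gt0_pi; rewrite tn_gt0 /=; apply: (le_lt_trans tn_le).
have := pi_gt0 R; lra.
Qed.
Lemma cos_tn_lt1 : cos tn < 1.
Proof.
rewrite lt_neqAle cos_le1 andbT; apply/eqP => h.
have := cos2Dsin2 tn; rewrite h expr1n => h2.
have : sin tn ^+ 2 = 0 by lra.
move/eqP; rewrite sqrf_eq0 => /eqP; have := sin_tn; lra.
Qed.

Lemma angD k l : ang (k + l) = ang k + ang l.
Proof. by rewrite /ang intrD mulrDl. Qed.
Lemma ang0 : ang 0 = 0.
Proof. by rewrite /ang mul0r. Qed.
Lemma ang1 : ang 1 = tn.
Proof. by rewrite /ang mul1r. Qed.
Lemma angN k : ang (- k) = - ang k.
Proof. by rewrite /ang intrN mulNr. Qed.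
Lemma ang_n : ang n = pi.
Proof. by rewrite /ang -ntn. Qed.
Lemma angDn (k : int) : ang (k + n) = ang k + pi.
Proof. by rewrite angD ang_n. Qed.
Lemma ang2n (k q : int) : ang (k + q * (n *+ 2)%:Z) = ang k + q%:~R * (pi *+ 2).
Proof.
rewrite angD /ang intrM -mulrA; congr (_ + _ * _).
by rewrite -ntn; ring.
Qed.

Lemma ang_red (k : int) : exists2 r : nat, (r < n *+ 2)%N &
  (cos (ang k) = cos (ang r) /\ sin (ang k) = sin (ang r)).
Proof.
have hN : (n *+ 2)%:Z != 0 by apply/eqP; lia.
set m := (k %% (n *+ 2)%:Z)%Z.
have m0 : 0 <= m := modz_ge0 _ hN.
have m1 : m < (n *+ 2)%:Z by apply: ltz_pmod; lia.
have e : k = m + (k %/ (n *+ 2)%:Z)%Z * (n *+ 2)%:Z by rewrite addrC -divz_eq.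
have em : m = Posz `|m|%N by rewrite gez0_abs.
exists `|m|%N; first by lia.
by rewrite e ang2n cos_perz sin_perz -em.
Qed.

Lemma ang_nat (r : nat) : ang r = r%:R * tn.
Proof. by []. Qed.

Lemma sin_nonneg (r : nat) : (r <= n)%N -> 0 <= sin (ang r).
Proof.
move=> hr; apply: sin_ge0_pi; rewrite ang_nat mulr_ge0 ?ler0n ?(ltW tn_gt0) //=.
by rewrite -ntn ler_pM2r ?tn_gt0 // ler_nat.
Qed.
Lemma sin_nonpos (r : nat) : (n <= r <= n *+ 2)%N -> sin (ang r) <= 0.
Proof.
move=> /andP[h1 h2].
have -> : Posz r = (r - n)%N%:Z + n by lia.
rewrite angDn sinDpi oppr_le0; apply: sin_nonneg; lia.
Qed.

Lemma sin_sign (k : int) : (0 <= sin (ang k) /\ 0 <= sin (ang (k + 1))) \/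
                           (sin (ang k) <= 0 /\ sin (ang (k + 1)) <= 0).
Proof.
have [r hr [hc hs]] := ang_red k.
have e : sin (ang (k + 1)) = sin (ang (r.+1)%N).
  by rewrite angD ang1 (_ : Posz r.+1 = Posz r + 1) ?angD ?ang1 ?sinD ?hc ?hs //; lia.
rewrite hs e; case: (ltnP r n) => h.
  by left; split; apply: sin_nonneg; lia.
by right; split; apply: sin_nonpos; lia.
Qed.

Section Abstract.
Variables (V : lmodType R) (ip : V -> V -> R).
Hypotheses (linl : forall (c : R) x y z, ip (c *: x + y) z = c * ip x z + ip y z)
           (sym : forall x y, ip x y = ip y x).

Lemma ip0l z : ip 0 z = 0.
Proof. have := linl 1 0 0 z; rewrite scaler0 addr0 mul1r => h; lra. Qed.
Lemma ipDl x y z : ip (x + y) z = ip x z + ip y z.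
Proof. by rewrite -[x]scale1r linl mul1r scale1r. Qed.
Lemma ipZl c x z : ip (c *: x) z = c * ip x z.
Proof. by rewrite -[c *: x]addr0 linl ip0l addr0. Qed.
Lemma ipDr x y z : ip z (x + y) = ip z x + ip z y.
Proof. by rewrite sym ipDl !(sym z). Qed.
Lemma ipZr c x z : ip z (c *: x) = c * ip z x.
Proof. by rewrite sym ipZl sym. Qed.
Lemma ip0r z : ip z 0 = 0.
Proof. by rewrite sym ip0l. Qed.

Definition rot (x y : V) (th : R) := cos th *: x + sin th *: y.
Definition Dset (x y : V) := [set v | exists k : int, v = rot x y (ang k)].

Lemma comb (x y : V) (p q p' q' c : R) :
  (p *: x + q *: y) - c *: (p' *: x + q' *: y) = (p - c * p') *: x + (q - c * q') *: y.
Proof. by rewrite scalerDr !scalerA !scalerBl opprD addrACA. Qed.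
Lemma comb2 (x y : V) (c0 c1 p q : R) :
  c0 *: x + c1 *: (p *: x + q *: y) = (c0 + c1 * p) *: x + (c1 * q) *: y.
Proof. by rewrite scalerDr !scalerA scalerDl addrA. Qed.

Lemma ang_nm1 : ang (n%:Z - 1) = pi - tn.
Proof. by rewrite angD angN ang1 ang_n. Qed.
Lemma cos_nm1 : cos (ang (n%:Z - 1)) = - cos tn.
Proof. by rewrite ang_nm1 addrC cosDpi cosN. Qed.
Lemma sin_nm1 : sin (ang (n%:Z - 1)) = sin tn.
Proof. by rewrite ang_nm1 addrC sinDpi sinN opprK. Qed.

Section Frame.
Variables x y : V.
Hypotheses (hx : ip x x = 1) (hy : ip y y = 1) (hxy : ip x y = 0).

Lemma ip_rot a b : ip (rot x y a) (rot x y b) = cos (a - b).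
Proof.
rewrite /rot !ipDl !ipDr !ipZl !ipZr hx hy hxy (sym y x) hxy cosB; ring.
Qed.
Lemma ip_rot_x a : ip (rot x y a) x = cos a.
Proof. by rewrite /rot ipDl !ipZl hx (sym y x) hxy; ring. Qed.
Lemma ip_rot_y a : ip (rot x y a) y = sin a.
Proof. by rewrite /rot ipDl !ipZl hy hxy; ring. Qed.
Lemma rot_neg k : - rot x y (ang k) = rot x y (ang (k + n)).
Proof. by rewrite /rot angDn cosDpi sinDpi !scaleNr opprD. Qed.
Lemma rot_ang0 : rot x y (ang 0) = x.
Proof. by rewrite /rot ang0 cos0 sin0 scale1r scale0r addr0. Qed.

Lemma refl_rot k j : refl ip (rot x y (ang k)) (rot x y (ang j)) = rot x y (ang (2 * k + n - j)).
Proof.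
rewrite /refl !ip_rot subrr cos0 divr1 /rot comb.
have -> : ang (2 * k + n - j) = 2 * ang k + pi - ang j.
  by rewrite !angD angN ang_n /ang intrM; ring.
by rewrite -cos_ref -sin_ref.
Qed.

Lemma D_root : root_system ip (Dset x y).
Proof.
split.
- apply: (@sub_finite_set _ _ [set` map (fun r : nat => rot x y (ang r)) (iota 0 (n *+ 2))]); last exact: finite_seq.
  move=> v [k ->]; have [r hr [hc hs]] := ang_red k.
  apply/mapP; exists r; first by rewrite mem_iota.
  by rewrite /rot hc hs.
- move=> v [k ->]; apply/eqP => h; have := ip_rot (ang k) (ang k).
  by rewrite h ip0l subrr cos0 => /eqP; rewrite eq_sym oner_eq0.
- by move=> v [k ->]; exists (k + n); rewrite rot_neg.
- move=> a c [k ->] [j hj].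
  have := ip_rot (ang j) (ang j); rewrite -hj ipZl ipZr ip_rot !subrr cos0 mulr1.
  by move/eqP; rewrite -expr2 sqrf_eq1 => /orP[/eqP->|/eqP->]; [left|right].
- by move=> a v [k ->] [j ->]; exists (2 * k + n - j); rewrite refl_rot.
Qed.

Definition b2 (i : 'I_2) : V := if (i : nat) == 0%N then x else rot x y (ang (n%:Z - 1)).

Lemma b2_1 : b2 1 = cos (ang (n%:Z - 1)) *: x + sin (ang (n%:Z - 1)) *: y.
Proof. by []. Qed.

Lemma D_simple : simple_system (Dset x y) b2.
Proof.
split.
- move=> i; rewrite /b2; case: ifP => _; last by exists (n%:Z - 1).
  by exists 0; rewrite rot_ang0.
- move=> c; rewrite big_ord_recr big_ord_recr big_ord0 /= add0r => h.
  have h1 := congr1 (fun v => ip v x) h; have h2 := congr1 (fun v => ip v y) h.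
  move: h1 h2 => /=; rewrite /b2 /= !ipDl !ipZl ip_rot_x ip_rot_y hx hxy !ip0l.
  rewrite cos_nm1 sin_nm1 => h1 h2.
  have hs := sin_tn.
  have e1 : c ord_max = 0.
    by apply/eqP; move: h2; rewrite mulr0 add0r => /eqP; rewrite mulf_eq0 (gt_eqF hs) orbF.
  have e0 : c (widen_ord (leqnSn 1) ord_max) = 0 by move: h1; rewrite e1 mul0r addr0 mulr1.
  move=> [[|[|//]] hi].
  + by rewrite -e0; congr c; apply/val_inj.
  + by rewrite -e1; congr c; apply/val_inj.
- move=> v [k ->].
  exists (fun i : 'I_2 => if (i : nat) == 0%N then (sin (ang k) * cos tn + cos (ang k) * sin tn) / sin tn else sin (ang k) / sin tn).
  have hs := sin_tn.
  split.
  + rewrite big_ord_recr big_ord_recr big_ord0 /= add0r /b2 /= /rot comb2 cos_nm1 sin_nm1.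
    by congr (_ *: _ + _ *: _); field; rewrite gt_eqF.
  + case: (sin_sign k) => [[h1 h2]|[h1 h2]]; rewrite angD ang1 sinD in h2; [left|right] => i; case: ifP => _.
    * exact: divr_ge0 h2 (ltW hs).
    * exact: divr_ge0 h1 (ltW hs).
    * by apply: mulr_le0_ge0 => //; rewrite invr_ge0 ltW.
    * by apply: mulr_le0_ge0 => //; rewrite invr_ge0 ltW.
Qed.

Lemma b2_ip (i j : 'I_2) : ip (b2 i) (b2 j) = if i == j then 1 else - cos tn.
Proof.
case: i => [[|[|//]] hi]; case: j => [[|[|//]] hj]; rewrite /b2 /=.
- by rewrite hx.
- by rewrite sym ip_rot_x cos_nm1.
- by rewrite ip_rot_x cos_nm1.
- by rewrite ip_rot subrr cos0.
Qed.

Lemma D_cartan : cartan ip b2 = I2cartan R n.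
Proof.
apply/matrixP => i j; rewrite !mxE !b2_ip eqxx divr1.
by case: eqP => _; rewrite ?mulr1 // /tn; ring.
Qed.

Lemma D_typeI2 : is_type_I2 ip n (Dset x y).
Proof. by split; [exact: D_root | exists b2; split; [exact: D_simple | exact: D_cartan]]. Qed.

End Frame.

Lemma sum2 (F : 'I_2 -> V) : \sum_(i < 2) F i = F (inord 0) + F (inord 1).
Proof.
rewrite !big_ord_recr big_ord0 /= add0r.
by congr (F _ + F _); apply/val_inj; rewrite /= inordK.
Qed.
Lemma sum4 (F : 'I_4 -> V) : \sum_(i < 4) F i = F (inord 0) + F (inord 1) + F (inord 2) + F (inord 3).
Proof.
rewrite !big_ord_recr big_ord0 /= add0r.
by congr (F _ + F _ + F _ + F _); apply/val_inj; rewrite /= inordK.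
Qed.

Lemma b2_rot (x y : V) (i : 'I_2) :
  b2 x y i = rot x y (if (i : nat) == 0%N then ang 0 else ang (n%:Z - 1)).
Proof. by rewrite /b2; case: ifP => // _; rewrite /rot ang0 cos0 sin0 scale1r scale0r addr0. Qed.

Section Frame4.
Variables x y z w : V.
Hypotheses (hx : ip x x = 1) (hy : ip y y = 1) (hxy : ip x y = 0)
           (hz : ip z z = 1) (hw : ip w w = 1) (hzw : ip z w = 0)
           (hxz : ip x z = 0) (hxw : ip x w = 0) (hyz : ip y z = 0) (hyw : ip y w = 0).

Lemma cross_rot a b : ip (rot x y a) (rot z w b) = 0.
Proof. by rewrite /rot !ipDl !ipDr !ipZl !ipZr hxz hxw hyz hyw; ring. Qed.

Lemma cross_D a b : Dset x y a -> Dset z w b -> ip a b = 0.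
Proof. by move=> [k ->] [j ->]; exact: cross_rot. Qed.

Let D1 := Dset x y.
Let D2 := Dset z w.

Lemma U_root : root_system ip (D1 `|` D2).
Proof.
have [f1 n1 o1 r1 s1] := D_root hx hy hxy.
have [f2 n2 o2 r2 s2] := D_root hz hw hzw.
split.
- by rewrite finite_setU.
- by move=> a [/n1|/n2].
- by move=> a [/o1 h|/o2 h]; [left|right].
- move=> a c [ha|ha] [hc|hc].
  + exact: r1 ha hc.
  + exfalso; have := cross_D ha hc; rewrite ipZr.
    have [k hk] := ha; rewrite hk ip_rot // subrr cos0 mulr1 => c0.
    by move: (n2 _ hc); rewrite c0 scale0r eqxx.
  + exfalso; have := cross_D hc ha; rewrite ipZl.
    have [k hk] := ha; rewrite hk ip_rot // subrr cos0 mulr1 => c0.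
    by move: (n1 _ hc); rewrite c0 scale0r eqxx.
  + exact: r2 ha hc.
- move=> a v [ha|ha] [hv|hv].
  + by left; apply: s1.
  + by right; rewrite /refl sym (cross_D ha hv) mulr0 mul0r scale0r subr0.
  + by left; rewrite /refl (cross_D hv ha) mulr0 mul0r scale0r subr0.
  + by right; apply: s2.
Qed.

Lemma U_typeI2I2 : is_type_I2I2 ip n (D1 `|` D2).
Proof.
split; first exact: U_root.
exists D1, D2; split => //.
- exact: cross_D.
- exact: D_typeI2.
- exact: D_typeI2.
Qed.

Definition beta4 (i : 'I_4) : V :=
  nth 0 [:: x; rot x y (ang (n%:Z - 1)); z; rot z w (ang (n%:Z - 1))] i.

Lemma beta4E (i : 'I_4) : beta4 i = if (i < 2)%N then b2 x y (inord i) else b2 z w (inord (i - 2)).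
Proof. by case: i => [[|[|[|[|//]]]] hi]; rewrite /beta4 /b2 /= ?inordK. Qed.

Lemma beta4_ip (i j : 'I_4) : ip (beta4 i) (beta4 j) =
  if i == j then 1 else if ((i : nat) %/ 2 == (j : nat) %/ 2)%N then - cos tn else 0.
Proof.
rewrite !beta4E; case: i => [[|[|[|[|//]]]] hi]; case: j => [[|[|[|[|//]]]] hj];
  rewrite /= ?b2_ip ?inordK //= ?b2_rot ?inordK //= ?cross_rot //.
all: try by rewrite sym cross_rot.
all: by rewrite -(inj_eq val_inj) /= !inordK.
Qed.


Lemma U_cartan : cartan ip beta4 = I2I2cartan R n.
Proof.
apply/matrixP => i j; rewrite !mxE !beta4_ip eqxx divr1.
by case: eqP => _; [rewrite mulr1 | case: eqP => _; rewrite /tn; ring].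
Qed.

Lemma U_simple : simple_system (D1 `|` D2) beta4.
Proof.
have [m1 _ dec1] := D_simple hx hy hxy.
have [m2 _ dec2] := D_simple hz hw hzw.
have hyx : ip y x = 0 by rewrite sym.
have hzx : ip z x = 0 by rewrite sym.
have hwx : ip w x = 0 by rewrite sym.
have hzy : ip z y = 0 by rewrite sym.
have hwy : ip w y = 0 by rewrite sym.
have hwz : ip w z = 0 by rewrite sym.
split.
- move=> i; rewrite beta4E; case: ifP => _; [left; exact: m1 | right; exact: m2].
- move=> c; rewrite sum4 /beta4 !inordK //= /rot => h.
  have hs := sin_tn.
  have ex := congr1 (fun v => ip v x) h; have ey := congr1 (fun v => ip v y) h.
  have ez := congr1 (fun v => ip v z) h; have ew := congr1 (fun v => ip v w) h.
  move: ex ey ez ew => /=.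
  rewrite cos_nm1 sin_nm1 !ipDl !ipZl !ip0l !linl !ipZl ?hx ?hy ?hz ?hw ?hxy ?hzw ?hxz ?hxw ?hyz ?hyw ?hyx ?hzx ?hwx ?hzy ?hwy ?hwz.
  move=> ex ey ez ew.
  have e1 : c (inord 1) = 0.
    by apply/eqP; move: ey => /eqP; rewrite !(mulr0, add0r, addr0, mulr1) mulf_eq0 (gt_eqF hs) orbF.
  have e3 : c (inord 3) = 0.
    by apply/eqP; move: ew => /eqP; rewrite !(mulr0, add0r, addr0, mulr1) mulf_eq0 (gt_eqF hs) orbF.
  have e0 : c (inord 0) = 0.
    by move: ex; rewrite e1 e3 !(mulr0, mul0r, add0r, addr0, mulr1).
  have e2 : c (inord 2) = 0.
    by move: ez; rewrite e1 e3 !(mulr0, mul0r, add0r, addr0, mulr1).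
  move=> i; have -> : i = inord i by apply/val_inj; rewrite /= inordK.
  by case: i => [[|[|[|[|//]]]] hi].
- move=> v [hv|hv].
  + have [c [ev hc]] := dec1 _ hv.
    exists (fun i : 'I_4 => if (i < 2)%N then c (inord i) else 0); split.
    * rewrite sum4 ev sum2 !beta4E !inordK //= !scale0r !addr0.
      by congr (_ *: b2 _ _ _ + _ *: b2 _ _ _); apply/val_inj; rewrite /= !inordK.
    * case: hc => hc; [left|right] => i; case: ifP => _ //; exact: hc.
  + have [c [ev hc]] := dec2 _ hv.
    exists (fun i : 'I_4 => if (i < 2)%N then 0 else c (inord (i - 2))); split.
    * rewrite sum4 ev sum2 !beta4E !inordK //= !scale0r !add0r.
      by congr (_ *: b2 _ _ _ + _ *: b2 _ _ _); apply/val_inj; rewrite /= !inordK.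
    * case: hc => hc; [left|right] => i; case: ifP => _ //; exact: hc.
Qed.
End Frame4.
End Abstract.

Section PhiSec.
Local Notation V3 := 'rV[R]_3.

Lemma dot3_linl (c : R) (x y z : V3) : dot3 (c *: x + y) z = c * dot3 x z + dot3 y z.
Proof. rewrite !dot3E !mxE; ring. Qed.
Lemma dot3_sym (x y : V3) : dot3 x y = dot3 y x.
Proof. rewrite !dot3E; ring. Qed.
Lemma dot3_pos (x : V3) : x != 0 -> 0 < dot3 x x.
Proof.
move=> hx; rewrite dot3E lt_neqAle; apply/andP; split; last first.
  by rewrite -!expr2 !addr_ge0 ?sqr_ge0.
apply: contra hx => /eqP h; apply/eqP/rowP => i; rewrite mxE.
have h0 : x 0 0 ^+ 2 + x 0 1 ^+ 2 + x 0 2 ^+ 2 = 0 by rewrite !expr2.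
have s0 := sqr_ge0 (x 0 0); have s1 := sqr_ge0 (x 0 1); have s2 := sqr_ge0 (x 0 2).
have z0 : x 0 0 ^+ 2 = 0 by lra.
have z1 : x 0 1 ^+ 2 = 0 by lra.
have z2 : x 0 2 ^+ 2 = 0 by lra.
move: z0 z1 z2 => /eqP; rewrite sqrf_eq0 => /eqP z0 /eqP; rewrite sqrf_eq0 => /eqP z1 /eqP; rewrite sqrf_eq0 => /eqP z2.
case: i => [[|[|[|//]]] hi].
- by rewrite -z0; congr (x 0 _); apply/val_inj.
- by rewrite -z1; congr (x 0 _); apply/val_inj.
- by rewrite -z2; congr (x 0 _); apply/val_inj.
Qed.

Lemma dZl c (x z : V3) : dot3 (c *: x) z = c * dot3 x z.
Proof. exact: (ipZl dot3_linl). Qed.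
Lemma dDl (x y z : V3) : dot3 (x + y) z = dot3 x z + dot3 y z.
Proof. exact: (ipDl dot3_linl). Qed.
Lemma dZr c (x z : V3) : dot3 z (c *: x) = c * dot3 z x.
Proof. exact: (ipZr dot3_linl dot3_sym). Qed.
Lemma dDr (x y z : V3) : dot3 z (x + y) = dot3 z x + dot3 z y.
Proof. exact: (ipDr dot3_linl dot3_sym). Qed.

Variables (Phi : set V3) (alpha : 'I_2 -> V3).
Hypotheses (hroot : root_system dot3 Phi) (hsimp : simple_system Phi alpha)
  (hunit : forall i, dot3 (alpha i) (alpha i) = 1) (hdot : dot3 (alpha 0) (alpha 1) = - cos tn).

Definition uu := alpha 0.
Definition ww := (sin tn)^-1 *: (alpha 1 + cos tn *: alpha 0).

Lemma uu_unit : dot3 uu uu = 1.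
Proof. exact: hunit. Qed.
Lemma uw0 : dot3 uu ww = 0.
Proof.
rewrite /uu /ww dZr dDr dZr hdot hunit; ring.
Qed.
Lemma ww_unit : dot3 ww ww = 1.
Proof.
rewrite /ww dZl dZr !dDl !dDr !dZl !dZr hunit hunit (dot3_sym (alpha 1)) hdot.
have hs := sin_tn; have h2 := cos2Dsin2 tn.
have -> : 1 + cos tn * - cos tn + (cos tn * - cos tn + cos tn * (cos tn * 1)) = sin tn ^+ 2 by lra.
by field; rewrite gt_eqF.
Qed.

Local Notation r := (fun k : int => rot uu ww (ang k)).

Lemma rot_a0 : r 0 = alpha 0.
Proof. by rewrite /= /rot ang0 cos0 sin0 scale1r scale0r addr0. Qed.
Lemma rot_a1 : r (n%:Z - 1) = alpha 1.
Proof.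
rewrite /= /rot cos_nm1 sin_nm1 /ww /uu scalerA mulfV ?gt_eqF ?sin_tn // scale1r.
by rewrite addrCA scaleNr addNr addr0.
Qed.

Lemma rot_per (k q : int) : r (k + q * (n *+ 2)%:Z) = r k.
Proof. by rewrite /= ang2n /rot cos_perz sin_perz. Qed.

Let rrefl k j := refl_rot dot3_linl dot3_sym uu_unit ww_unit uw0 k j.

Lemma Phi_refl a x : Phi a -> Phi x -> Phi (refl dot3 a x).
Proof. by case: hroot => _ _ _ _; apply. Qed.

Lemma Phi_r0 : Phi (r 0).
Proof. by rewrite /= rot_a0; case: hsimp. Qed.
Lemma Phi_rn1 : Phi (r (n%:Z - 1)).
Proof. by rewrite /= rot_a1; case: hsimp. Qed.

Lemma up2 j : Phi (r j) -> Phi (r (j + 2)).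
Proof.
move=> hj; have := Phi_refl Phi_r0 (Phi_refl Phi_rn1 hj).
have E : 2 * 0 + n%:Z - (2 * (n%:Z - 1) + n%:Z - j) = (j + 2) + (-1) * (n *+ 2)%:Z by lia.
by rewrite /= !rrefl E; have := rot_per (j + 2) (-1); rewrite /= => ->.
Qed.
Lemma down2 j : Phi (r j) -> Phi (r (j - 2)).
Proof.
move=> hj; have := Phi_refl Phi_rn1 (Phi_refl Phi_r0 hj).
have E : 2 * (n%:Z - 1) + n%:Z - (2 * 0 + n%:Z - j) = (j - 2) + 1 * (n *+ 2)%:Z by lia.
by rewrite /= !rrefl E; have := rot_per (j - 2) 1; rewrite /= => ->.
Qed.

Lemma all2 b : Phi (r b) -> forall m : int, Phi (r (b + 2 * m)).
Proof.
move=> hb.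
have H : forall p : nat, Phi (r (b + 2 * p%:Z)) /\ Phi (r (b - 2 * p%:Z)).
  elim=> [|p [IH1 IH2]]; first by rewrite mulr0 addr0 ?subr0 ?oppr0 ?addr0.
  split.
  + by have := up2 IH1; rewrite (_ : b + 2 * p%:Z + 2 = b + 2 * p.+1%:Z) //; lia.
  + by have := down2 IH2; rewrite (_ : b - 2 * p%:Z - 2 = b - 2 * p.+1%:Z) //; lia.
case=> p; first exact: (H p).1.
by have := (H p.+1).2; rewrite (_ : b - 2 * p.+1%:Z = b + 2 * Negz p) //; lia.
Qed.

Lemma int_split (k : int) : exists m : int, k = 2 * m \/ k = (n%:Z - 1) + 2 * m \/ k = n%:Z + 2 * m.
Proof.
have ek := divz_eq k 2; have en := divz_eq n 2.
have k0 : 0 <= (k %% 2)%Z by apply: modz_ge0.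
have k1 : (k %% 2)%Z < 2 by apply: ltz_pmod.
have n0 : 0 <= (n%:Z %% 2)%Z by apply: modz_ge0.
have n1 : (n%:Z %% 2)%Z < 2 by apply: ltz_pmod.
move: ek en k0 k1 n0 n1.
set a := (k %/ 2)%Z; set rr := (k %% 2)%Z; set b := (n%:Z %/ 2)%Z; set e := (n%:Z %% 2)%Z.
move=> ek en k0 k1 n0 n1.
have [hr|hr] : rr = 0 \/ rr = 1 by lia.
  by exists a; left; lia.
have [he|he] : e = 0 \/ e = 1 by lia.
  by exists (a - b + 1); right; left; lia.
by exists (a - b); right; right; lia.
Qed.

Lemma Phi_all k : Phi (r k).
Proof.
have [m [->|[->|->]]] := int_split k.
- by have := all2 Phi_r0 m; rewrite add0r.
- exact: all2 Phi_rn1 m.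
- have := all2 Phi_r0 m; rewrite add0r => h.
  case: hroot => _ _ hneg _ _; have := hneg _ h.
  by rewrite /= rot_neg addrC.
Qed.

Local Notation Rs := (Dset uu ww).

Lemma Rs_neg v : Rs v -> Rs (- v).
Proof. by move=> [k ->]; exists (k + n); rewrite rot_neg. Qed.
Lemma Rs_refl0 v : Rs v -> Rs (refl dot3 (alpha 0) v).
Proof. by move=> [k ->]; rewrite -rot_a0 /= rrefl; eexists. Qed.
Lemma Rs_refl1 v : Rs v -> Rs (refl dot3 (alpha 1) v).
Proof. by move=> [k ->]; rewrite -rot_a1 /= rrefl; eexists. Qed.
Lemma Rs_a0 : Rs (alpha 0).
Proof. by exists 0; rewrite -rot_a0. Qed.
Lemma Rs_a1 : Rs (alpha 1).
Proof. by exists (n%:Z - 1); rewrite -rot_a1. Qed.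

Lemma refl_inv (a v : V3) : dot3 a a = 1 -> refl dot3 a (refl dot3 a v) = v.
Proof.
move=> hA; rewrite /refl hA !divr1.
set d := dot3 v a.
have -> : v - (2 * d) *: a = (- (2 * d)) *: a + v by rewrite addrC scaleNr.
rewrite dot3_linl hA mulr1 -/d addrAC -scalerBl.
by rewrite (_ : - (2 * d) - 2 * (- (2 * d) + d) = 0) ?scale0r ?add0r //; ring.
Qed.

Lemma inord0 : (inord 0 : 'I_2) = 0.
Proof. by apply/val_inj; rewrite /= inordK. Qed.
Lemma inord1 : (inord 1 : 'I_2) = 1.
Proof. by apply/val_inj; rewrite /= inordK. Qed.

Lemma indep2 p q : p *: alpha 0 + q *: alpha 1 = 0 -> p = 0 /\ q = 0.
Proof.
move=> h; case: hsimp => _ hi _.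
have := hi (fun i : 'I_2 => if (i : nat) == 0%N then p else q).
rewrite (sum2 (fun i : 'I_2 => _ *: alpha i)) !inordK //= inord0 inord1 => /(_ h) H.
by split; [exact: (H 0) | exact: (H 1)].
Qed.

Lemma decomp x : Phi x -> exists p q, x = p *: alpha 0 + q *: alpha 1 /\
  ((0 <= p /\ 0 <= q) \/ (p <= 0 /\ q <= 0)).
Proof.
move=> hx; case: hsimp => _ _ hd; have [c [ex hc]] := hd x hx.
exists (c 0), (c 1); split.
  by rewrite ex (sum2 (fun i : 'I_2 => c i *: alpha i)) inord0 inord1.
by case: hc => hc; [left|right]; split; apply: hc.
Qed.

Lemma uniq2 p q p' q' : p *: alpha 0 + q *: alpha 1 = p' *: alpha 0 + q' *: alpha 1 -> p = p' /\ q = q'.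
Proof.
move=> h; have := @indep2 (p - p') (q - q').
rewrite !scalerBl addrACA h -opprD subrr => /(_ erefl) [h1 h2]; split; lra.
Qed.

Definition ht (y : V3) := dot3 y (alpha 0 + alpha 1).
Lemma ht_lin (c0 c1 : R) : ht (c0 *: alpha 0 + c1 *: alpha 1) = (c0 + c1) * (1 - cos tn).
Proof.
rewrite /ht dot3_linl dZl !dDr hunit hunit hdot (dot3_sym (alpha 1)) hdot; ring.
Qed.

Lemma count_lt (T : eqType) (p q : pred T) (s : seq T) y :
  (forall z, q z -> p z) -> y \in s -> p y -> ~~ q y -> (count q s < count p s)%N.
Proof.
move=> hqp; elim: s => //= z s IH; rewrite inE => /orP[/eqP <-|ys] py nqy.
  by rewrite py (negbTE nqy) add0n add1n ltnS; apply: sub_count.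
have := IH ys py nqy; case: (boolP (q z)) => [/hqp -> |_] /=; lia.
Qed.

Lemma descent (s : seq V3) : Phi = [set` s] ->
  forall N (x : V3) (c0 c1 : R), Phi x -> 0 <= c0 -> 0 <= c1 ->
  x = c0 *: alpha 0 + c1 *: alpha 1 ->
  (count (fun y => (ht y < ht x)%R) s < N)%N -> Rs x.
Proof.
move=> hs; elim=> [//|N IH] x c0 c1 hx h0 h1 ex hc.
have hct := cos_tn_lt1.
have xnz : x != 0 by case: hroot => _ hnz _ _ _; apply: hnz.
have pos := dot3_pos xnz.
have dx : dot3 x x = c0 * dot3 x (alpha 0) + c1 * dot3 x (alpha 1).
  by rewrite {1}ex dot3_linl dZl (dot3_sym (alpha 0)) (dot3_sym (alpha 1)).
have Phia0 : Phi (alpha 0) by case: hsimp.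
have Phia1 : Phi (alpha 1) by case: hsimp.
have hsub : forall x', Phi x' -> ht x' < ht x -> Rs x' -> forall c0' c1', 0 <= c0' -> 0 <= c1' ->
    x' = c0' *: alpha 0 + c1' *: alpha 1 -> Rs x'.
  by [].
have step : forall x' c0' c1', Phi x' -> 0 <= c0' -> 0 <= c1' -> x' = c0' *: alpha 0 + c1' *: alpha 1 ->
    ht x' < ht x -> Rs x'.
  move=> x' c0' c1' hx' h0' h1' ex' hlt; apply: (IH x' c0' c1') => //.
  have : (count (fun y => (ht y < ht x')%R) s < count (fun y => (ht y < ht x)%R) s)%N.
    apply: (@count_lt _ _ _ _ x').
    - by move=> z /= hz; apply: lt_trans hlt.
    - by have : [set` s] x' by rewrite -hs.
    - by [].
    - by rewrite /= ltxx.
  move=> h; lia.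
have [hA|hB] : 0 < c0 * dot3 x (alpha 0) \/ 0 < c1 * dot3 x (alpha 1).
  case: (ltP 0 (c0 * dot3 x (alpha 0))) => H; [by left | right; lra].
- have c0p : 0 < c0 by rewrite lt_neqAle h0 andbT; apply/eqP => c0z; move: hA; rewrite -c0z mul0r ltxx.
  have d0p : 0 < dot3 x (alpha 0) by move: hA; rewrite pmulr_rgt0.
  case: (eqVneq c1 0) => [c1z|c1nz].
    case: hroot => _ _ _ hred _.
    have hx' : Phi (c0 *: alpha 0) by move: hx; rewrite ex c1z scale0r addr0.
    have [c01|c0m] := hred _ _ Phia0 hx'; last by move: c0p; rewrite c0m; lra.
    by rewrite ex c1z c01 scale1r scale0r addr0; exact: Rs_a0.
  have c1p : 0 < c1 by rewrite lt_neqAle h1 eq_sym c1nz.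
  set x' := refl dot3 (alpha 0) x.
  have ex' : x' = (c0 - 2 * dot3 x (alpha 0)) *: alpha 0 + c1 *: alpha 1.
    by rewrite /x' /refl hunit divr1 {1}ex scalerBl addrAC.
  have hx' : Phi x' by apply: Phi_refl.
  have [p [q [epq hpq]]] := decomp hx'.
  have [ep eqq] := uniq2 (etrans (esym epq) ex').
  have p0 : 0 <= p by case: hpq => [[]//|[_ hq]]; move: hq; rewrite eqq; lra.
  have hlt : ht x' < ht x.
    rewrite ex' {2}ex !ht_lin; have := hct; nra.
  have := step x' p q hx' p0 (ltac:(rewrite eqq; exact: ltW c1p)) epq hlt.
  by move/Rs_refl0; rewrite /x' refl_inv.
- have c1p : 0 < c1 by rewrite lt_neqAle h1 andbT; apply/eqP => c1z; move: hB; rewrite -c1z mul0r ltxx.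
  have d1p : 0 < dot3 x (alpha 1) by move: hB; rewrite pmulr_rgt0.
  case: (eqVneq c0 0) => [c0z|c0nz].
    case: hroot => _ _ _ hred _.
    have hx' : Phi (c1 *: alpha 1) by move: hx; rewrite ex c0z scale0r add0r.
    have [c11|c1m] := hred _ _ Phia1 hx'; last by move: c1p; rewrite c1m; lra.
    by rewrite ex c0z c11 scale1r scale0r add0r; exact: Rs_a1.
  have c0p : 0 < c0 by rewrite lt_neqAle h0 eq_sym c0nz.
  set x' := refl dot3 (alpha 1) x.
  have ex' : x' = c0 *: alpha 0 + (c1 - 2 * dot3 x (alpha 1)) *: alpha 1.
    by rewrite /x' /refl hunit divr1 {1}ex scalerBl addrA.
  have hx' : Phi x' by apply: Phi_refl.
  have [p [q [epq hpq]]] := decomp hx'.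
  have [ep eqq] := uniq2 (etrans (esym epq) ex').
  have q0 : 0 <= q by case: hpq => [[]//|[hp _]]; move: hp; rewrite ep; lra.
  have hlt : ht x' < ht x.
    rewrite ex' {2}ex !ht_lin; have := hct; nra.
  have := step x' p q hx' (ltac:(rewrite ep; exact: ltW c0p)) q0 epq hlt.
  by move/Rs_refl1; rewrite /x' refl_inv.
Qed.

Lemma Phi_eq : Phi = Dset uu ww.
Proof.
apply/seteqP; split; last by move=> v [k ->]; exact: Phi_all.
move=> x hx.
have [s hs] : exists s : seq V3, Phi = [set` s] by apply/finite_seqP; case: hroot.
have [p [q [e [[hp hq]|[hp hq]]]]] := decomp hx.
  exact: (@descent s hs _ x p q hx hp hq e (ltnSn _)).
have hnx : Phi (- x) by case: hroot => _ _ hneg _ _; apply: hneg.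
have e' : - x = (- p) *: alpha 0 + (- q) *: alpha 1 by rewrite e opprD !scaleNr.
have := @descent s hs _ (- x) (- p) (- q) hnx (ltac:(lra)) (ltac:(lra)) e' (ltnSn _).
by move/Rs_neg; rewrite opprK.
Qed.

End PhiSec.
End Trig.

Section Main.
Variables (R : realType) (n : nat) (Phi : set 'rV[R]_3) (alpha : 'I_2 -> 'rV[R]_3).
Hypotheses (hn : (2 <= n)%N) (hroot : root_system dot3 Phi) (hsimp : simple_system Phi alpha)
  (hunit : forall i, dot3 (alpha i) (alpha i) = 1)
  (hdot : dot3 (alpha 0) (alpha 1) = - cos (pi / n%:R)).

Local Notation u := (uu alpha).
Local Notation w := (ww n alpha).
Local Notation I := (e123 R).
Local Notation one := (cl1 R).
Local Notation ang := (ang R n).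

Lemma hu : dot3 u u = 1. Proof. exact: uu_unit. Qed.
Lemma hw : dot3 w w = 1. Proof. exact: (ww_unit hn hunit hdot). Qed.
Lemma huw : dot3 u w = 0. Proof. exact: (uw0 hunit hdot). Qed.

Lemma PhiE : Phi = Dset n u w.
Proof. exact: (Phi_eq hn hroot hsimp hunit hdot). Qed.

Definition X (b : bool) (th : R) : Cl3 R := if b then Vt u w th else Rt u w th.
Definition elt (b e : bool) (th : R) : Cl3 R := if e then clmul (X b th) I else X b th.
Definition Sset := [set x | exists b e (k : int), x = elt b e (ang k)].

Lemma base_mul b1 b2 k1 k2 : exists k3, clmul (X b1 (ang k1)) (X b2 (ang k2)) = X (b1 (+) b2) (ang k3).
Proof.
case: b1; case: b2; rewrite /X /=.
- by exists (k2 - k1); rewrite (VV hu hw huw) angD angN.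
- by exists (k1 + k2); rewrite (VR hu hw huw) angD.
- by exists (k2 - k1); rewrite (RV hu hw huw) angD angN.
- by exists (k1 + k2); rewrite (RR hu hw huw) angD.
Qed.

Lemma base_neg b k : - X b (ang k) = X b (ang (k + n)).
Proof. by case: b; rewrite /X; [exact: rot_neg | exact: rot_neg]. Qed.

Lemma base_inv b k : exists k', clmul (X b (ang k')) (X b (ang k)) = one.
Proof.
case: b; rewrite /X.
- by exists k; rewrite (VV hu hw huw) subrr (Rt0 u w).
- by exists (- k); rewrite (RR hu hw huw) angN addNr (Rt0 u w).
Qed.

Lemma IImul x y : clmul (clmul x I) (clmul y I) = - clmul x y.
Proof.
rewrite clmulA -(clmulA I y I) clI_central clmulA clII clmulNr clmulx1 clmulNr.
by [].
Qed.
Lemma Imul_l x y : clmul (clmul x I) y = clmul (clmul x y) I.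
Proof. by rewrite clmulA clI_central -clmulA. Qed.
Lemma Imul_r x y : clmul x (clmul y I) = clmul (clmul x y) I.
Proof. by rewrite -clmulA. Qed.

Lemma S_mul x y : Sset x -> Sset y -> Sset (clmul x y).
Proof.
move=> [b1 [e1 [k1 ->]]] [b2 [e2 [k2 ->]]].
have [k3 h3] := base_mul b1 b2 k1 k2.
case: e1; case: e2; rewrite /elt.
- by exists (b1 (+) b2), false, (k3 + n); rewrite IImul h3 base_neg.
- by exists (b1 (+) b2), true, k3; rewrite Imul_l h3.
- by exists (b1 (+) b2), true, k3; rewrite Imul_r h3.
- by exists (b1 (+) b2), false, k3; rewrite h3.
Qed.

Lemma S_inv x : Sset x -> exists2 z, Sset z & clmul z x = one.
Proof.
move=> [b [e [k ->]]]; have [k' hk'] := base_inv b k.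
case: e; rewrite /elt.
- exists (clmul (X b (ang (k' + n))) I); first by exists b, true, (k' + n).
  by rewrite IImul -base_neg clmulNl hk' opprK.
- by exists (X b (ang k')) => //; exists b, false, k'.
Qed.

Lemma S_neq0 x : Sset x -> x != 0.
Proof.
move=> /S_inv [z _ hz]; apply/eqP => x0; move: hz; rewrite x0 clmul0r => h.
by move: (cl1_neq0 R); rewrite -h eqxx.
Qed.

Lemma vecZ (c : R) (v : 'rV[R]_3) : vec (c *: v) = c *: vec v.
Proof. by have := vec_lin c v 0; rewrite addr0 => ->; rewrite (_ : vec (0 : 'rV[R]_3) = 0) ?addr0 //; rewrite vecE !mxE !scale0r !addr0. Qed.
Lemma vec_rot th : vec (rot u w th) = Vt u w th.
Proof. by rewrite /rot vec_lin vecZ. Qed.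

Definition P := gen_group ((vec @` Phi) `|` [set I]).

Lemma P_S x : P x -> Sset x.
Proof.
elim => {x}.
- by exists false, false, 0; rewrite /elt /X ang0 (Rt0 u w).
- move=> x [[v hv <-]|->].
  + rewrite PhiE in hv; case: hv => k ->.
    by exists true, false, k; rewrite /elt /X vec_rot.
  + by exists false, true, 0; rewrite /elt /X ang0 (Rt0 u w) clmul1x.
- by move=> x y _ hx _ hy; apply: S_mul.
- move=> x y _ hx hxy hyx; have [z hz hzx] := S_inv hx.
  have -> : y = z by rewrite -[y]clmul1x -hzx clmulA hxy clmulx1.
  exact: hz.
Qed.

Local Notation U := (vec u).
Local Notation W := (vec w).
Local Notation B := (clmul (vec u) (vec w)).
Definition f3 := clmul U I.
Definition f4 := clmul W I.

Lemma VtI th : clmul (Vt u w th) I = rot f3 f4 th.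
Proof. by rewrite /Vt clmulDl !clmulZl. Qed.

Definition E := Dset n one B `|` Dset n f3 f4.

Lemma gen_vec v : Phi v -> P (vec v).
Proof. by move=> hv; apply: gg_gen; left; exists v. Qed.
Lemma P_rot k : P (Vt u w (ang k)).
Proof. rewrite -vec_rot; apply: gen_vec; rewrite PhiE; by exists k. Qed.
Lemma P_U : P U.
Proof. by apply: gen_vec; case: hsimp => h _ _; exact: h. Qed.

Lemma G_E : P `&` @cl_even R = E.
Proof.
apply/seteqP; split.
- move=> x [hP hE]; have hS := P_S hP; have hev := (par_even x).1 hE; have nz := S_neq0 hS.
  case: hS => [b [e [k ex]]]; move: ex nz hev; case: b; case: e; rewrite /elt /X => ->.
  + by right; exists k; rewrite VtI.
  + move=> nz hev; exfalso; move/eqP: nz; apply.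
    exact: (par_eq0 hev (par_Vt u w (ang k))).
  + move=> nz hev; exfalso; move/eqP: nz; apply.
    exact: (par_eq0 hev (par_mul (par_Rt u w (ang k)) (parI R))).
  + by left; exists k.
- move=> x [[k ->]|[k ->]]; split.
  + have -> : rot one B (ang k) = clmul (Vt u w 0) (Vt u w (ang k)).
      by rewrite (VV hu hw huw) subr0.
    rewrite (Vt0 u w).
    by apply: gg_mul; [exact: P_U | exact: P_rot].
  + by apply/par_even; exact: (par_Rt u w (ang k)).
  + rewrite -VtI; apply: gg_mul; [exact: P_rot | by apply: gg_gen; right].
  + apply/par_even; rewrite -VtI.
    exact: (par_mul (par_Vt u w (ang k)) (parI R)).
Qed.

Lemma e1 : one = emb u w 1 0 0 0.
Proof. by rewrite /emb scale1r !scale0r !addr0. Qed.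
Lemma e2 : B = emb u w 0 0 0 1.
Proof. by rewrite /emb scale1r !scale0r !add0r. Qed.
Lemma e3 : U = emb u w 0 1 0 0.
Proof. by rewrite /emb scale1r !scale0r add0r !addr0. Qed.
Lemma e4 : W = emb u w 0 0 1 0.
Proof. by rewrite /emb scale1r !scale0r !add0r addr0. Qed.

Let ipE := ip_emb hu hw huw.
Let ipC := ip_cross hu hw huw.

Lemma o_xx : spinor_ip one one = 1. Proof. by rewrite e1 ipE; ring. Qed.
Lemma o_yy : spinor_ip B B = 1. Proof. by rewrite e2 ipE; ring. Qed.
Lemma o_xy : spinor_ip one B = 0. Proof. by rewrite e2 e1 ipE; ring. Qed.
Lemma o_zz : spinor_ip f3 f3 = 1. Proof. by rewrite /f3 ip_II e3 ipE; ring. Qed.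
Lemma o_ww : spinor_ip f4 f4 = 1. Proof. by rewrite /f4 ip_II e4 ipE; ring. Qed.
Lemma o_zw : spinor_ip f3 f4 = 0. Proof. by rewrite /f3 /f4 ip_II e3 e4 ipE; ring. Qed.
Lemma o_xz : spinor_ip one f3 = 0. Proof. by rewrite /f3 e3 e1 ipC. Qed.
Lemma o_xw : spinor_ip one f4 = 0. Proof. by rewrite /f4 e4 e1 ipC. Qed.
Lemma o_yz : spinor_ip B f3 = 0. Proof. by rewrite /f3 e2 e3 ipC. Qed.
Lemma o_yw : spinor_ip B f4 = 0. Proof. by rewrite /f4 e2 e4 ipC. Qed.

Definition a1 := vec (alpha 0).
Definition a2 := vec (alpha 1).
Definition beta : 'I_4 -> Cl3 R :=
  fun i => nth 0 [:: clmul a1 a1; clmul a1 a2; clmul a1 (e123 R); clmul a2 (e123 R)] i.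

Lemma ha1 : rot u w (ang (n%:Z - 1)) = alpha 1.
Proof. exact: (rot_a1 hn alpha). Qed.

Lemma beta_eq : beta = beta4 n one B f3 f4.
Proof.
apply/funext => i; case: i => [[|[|[|[|//]]]] hi]; rewrite /beta /beta4 /=.
- exact: (UU hu).
- have -> : clmul a1 a2 = clmul (Vt u w 0) (Vt u w (ang (n%:Z - 1))).
    by rewrite (Vt0 u w) -vec_rot ha1.
  by rewrite (VV hu hw huw) subr0.
- by [].
- by rewrite /a2 -ha1 vec_rot VtI.
Qed.

Lemma final : [/\ root_system (@spinor_ip R) (P `&` @cl_even R),
  is_type_I2I2 (@spinor_ip R) n (P `&` @cl_even R),
  simple_system (P `&` @cl_even R) beta
  & cartan (@spinor_ip R) beta = I2I2cartan R n].
Proof.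
rewrite G_E beta_eq /E; split.
- exact: (U_root hn (@ip_linl R) (@ip_sym R) o_xx o_yy o_xy o_zz o_ww o_zw o_xz o_xw o_yz o_yw).
- exact: (U_typeI2I2 hn (@ip_linl R) (@ip_sym R) o_xx o_yy o_xy o_zz o_ww o_zw o_xz o_xw o_yz o_yw).
- exact: (U_simple hn (@ip_linl R) (@ip_sym R) o_xx o_yy o_xy o_zz o_ww o_zw o_xz o_xw o_yz o_yw).
- exact: (U_cartan hn (@ip_linl R) (@ip_sym R) o_xx o_yy o_xy o_zz o_ww o_zw o_xz o_xw o_yz o_yw).
Qed.

End Main.

Theorem mainTheorem4 (R : realType) (n : nat) (Phi : set 'rV[R]_3)
  (alpha : 'I_2 -> 'rV[R]_3) :
  (2 <= n)%N ->
  is_type_I2 (@dot3 R) n Phi ->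
  simple_system Phi alpha ->
  (forall i, dot3 (alpha i) (alpha i) = 1) ->
  dot3 (alpha 0) (alpha 1) = - cos (pi / n%:R) ->
  let P := gen_group ((vec @` Phi) `|` [set e123 R]) in
  let G := P `&` @cl_even R in
  let a1 := vec (alpha 0) in
  let a2 := vec (alpha 1) in
  let beta : 'I_4 -> Cl3 R :=
    fun i => nth 0 [:: clmul a1 a1; clmul a1 a2; clmul a1 (e123 R);
                       clmul a2 (e123 R)] i in
  [/\ root_system (@spinor_ip R) G,
      is_type_I2I2 (@spinor_ip R) n G,
      simple_system G beta
    & cartan (@spinor_ip R) beta = I2I2cartan R n].
Proof.
move=> hn [hroot _] hsimp hunit hdot.
exact: (final hn hroot hsimp hunit hdot).
Qed.
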